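(* For every $r\geq 2$, there exist $c_1,C>0$ such that the following holds. Let $H$ be an $r$-uniform hypergraph on $n$ vertices of average degree $d$. Let $X\subset V(H)$ be such that every vertex in $X$ has degree at least $Cd$. Then $\mathrm{disc}^{+}(H)\geq c_1|\partial(X)|$.
   Context: $\partial(X)$ denotes the set of edges of $H$ having at least one vertex in $X$. The average degree is $d=r|E(H)|/n$. With edge density $p=|E(H)|/\binom{n}{r}$ and $e(U)$ the number of edges contained in $U\subset V(H)$, $\mathrm{disc}(U)=e(U)-p\binom{|U|}{r}$ and $\mathrm{disc}^{+}(H)=\max_{U\subset V(H)}\mathrm{disc}(U)$. *)

(* Defs.v *)
From mathcomp Require Import all_boot all_order all_algebra.
Set Implicit Arguments. Unset Strict Implicit. Unset Printing Implicit Defensive.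
Import Order.TTheory GRing.Theory Num.Theory.
Local Open Scope ring_scope.

(* An r-uniform hypergraph on vertex set T (a finite type, n = #|T|) is given
   by its edge set E : {set {set T}}, each edge having exactly r vertices. *)
Definition uniform (T : finType) (r : nat) (E : {set {set T}}) : Prop :=
  forall e, e \in E -> #|e| = r.

Definition deg (T : finType) (E : {set {set T}}) (x : T) : nat :=
  #|[set e in E | x \in e]|.

Definition avg_deg (T : finType) (r : nat) (E : {set {set T}}) : rat :=
  (r * #|E|)%:R / (#|T|)%:R.

Definition boundary (T : finType) (E : {set {set T}}) (X : {set T}) : {set {set T}} :=
  [set e in E | ~~ [disjoint e & X]].

Definition density (T : finType) (r : nat) (E : {set {set T}}) : rat :=
  (#|E|)%:R / ('C(#|T|, r))%:R.

Definition e_in (T : finType) (E : {set {set T}}) (U : {set T}) : nat :=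
  #|[set e in E | e \subset U]|.

Definition disc (T : finType) (r : nat) (E : {set {set T}}) (U : {set T}) : rat :=
  (e_in E U)%:R - density r E * ('C(#|U|, r))%:R.

(* disc^+(H) = max over all U of disc(U).  The max is taken with neutral
   element 0; since U = set0 is among the indices and disc(set0) = 0 for
   r >= 1, this is exactly the maximum over all U. *)
Definition disc_plus (T : finType) (r : nat) (E : {set {set T}}) : rat :=
  \big[Num.max/0]_(U : {set T}) disc r E U.

(* Main.v *)
From mathcomp Require Import all_boot all_order all_algebra.
Require Import Defs.
Import Order.TTheory GRing.Theory Num.Theory.
From mathcomp Require Import ring lra.
Set Implicit Arguments. Unset Strict Implicit.

Lemma card_sum (T : finType) (A : {set T}) (P : pred T) :
  #|[set x in A | P x]| = \sum_(x in A) (P x : nat).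
Proof.
rewrite -sum1_card big_mkcond /= [RHS]big_mkcond; apply: eq_bigr => x _.
by rewrite inE; case: (x \in A); case: (P x).
Qed.

Lemma count_super (T : finType) (A B : {set T}) : B \subset A ->
  #|[set W in powerset A | B \subset W]| = 2 ^ (#|A| - #|B|).
Proof.
move=> BA.
have -> : [set W in powerset A | B \subset W] = [set B :|: W | W in powerset (A :\: B)].
  apply/setP => W; rewrite !inE; apply/andP/imsetP.
  - case=> WA BW; exists (W :\: B); first by rewrite inE; apply: setSD.
    apply/setP=> y; rewrite !inE; case yB: (y \in B) => //=.
    by rewrite (subsetP BW).
  - case=> W' + ->; rewrite inE => W'AB; split; last by rewrite subsetUl.
    by rewrite subUset BA (subset_trans W'AB) // subsetDl.
rewrite card_in_imset ?card_powerset.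
  by rewrite cardsD (setIidPr BA).
move=> W1 W2; rewrite !inE => H1 H2 E.
apply/setP=> y; have := congr1 (fun S : {set T} => y \in S) E; rewrite /= !inE => Ey.
have N1 := subsetP H1 y; have N2 := subsetP H2 y; rewrite !inE in N1 N2.
case yB: (y \in B) Ey => /= Ey; last by [].
case: (y \in W1) N1 => [/(_ isT)|_]; first by rewrite yB.
by case: (y \in W2) N2 => [/(_ isT)|_] //; rewrite yB.
Qed.

Lemma sum_shift (T : finType) (X : {set T}) (G : {set {set T}}) :
  \sum_(W in powerset (~: X)) #|[set S in G | S \subset X :|: W]|
  = \sum_(S in G) 2 ^ (#|~: X| - #|S :\: X|).
Proof.
under eq_bigr => W _ do rewrite card_sum.
rewrite exchange_big; apply: eq_bigr => S _.
rewrite -card_sum -count_super; last by apply/subsetP=> y; rewrite !inE => /andP[].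
by apply: eq_card => W; rewrite !inE subDset.
Qed.

Lemma count_contain (T : finType) (x : T) (r : nat) :
  #|[set S : {set T} | #|S| == r.+1 & x \in S]| = 'C(#|T|.-1, r).
Proof.
rewrite -(cardsC1 x) -cards_draws.
have -> : [set S : {set T} | #|S| == r.+1 & x \in S] =
  [set x |: S' | S' in [set A : {set T} | A \subset [set~ x] & #|A| == r]].
  apply/setP => S; rewrite !inE; apply/andP/imsetP.
  - case=> /eqP cS xS; exists (S :\ x); last by rewrite setD1K.
    rewrite inE; apply/andP; split.
      by apply/subsetP=> y; rewrite !inE => /andP[].
    by move: cS; rewrite (cardsD1 x) xS add1n => -[->].
  - case=> S'; rewrite inE => /andP[sub /eqP cS'] ->; split; last by rewrite setU11.
    rewrite cardsU1 cS'; have -> : x \notin S' by apply/negP=> /(subsetP sub); rewrite !inE eqxx.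
    by [].
rewrite card_in_imset //.
move=> A B; rewrite !inE => /andP[sA _] /andP[sB _] E.
have nA : x \notin A by apply/negP=> /(subsetP sA); rewrite !inE eqxx.
have nB : x \notin B by apply/negP=> /(subsetP sB); rewrite !inE eqxx.
by rewrite -(setU1K nA) -(setU1K nB) E.
Qed.

Lemma deg_sum (T : finType) (r : nat) (E : {set {set T}}) (X : {set T}) :
  uniform r E -> \sum_(x in X) deg E x <= r * #|boundary E X|.
Proof.
move=> U; rewrite /deg.
under eq_bigr => x _ do rewrite card_sum.
rewrite exchange_big /boundary card_sum big_distrr /=.
apply: leq_sum => e eE.
case: (boolP [disjoint e & X]) => D /=.
  rewrite big1 // => x xX.
  by rewrite (disjointFl D xX).
rewrite muln1 -card_sum -(U e eE); apply: subset_leq_card.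
by apply/subsetP => x; rewrite inE => /andP[].
Qed.

Lemma disc_plus_ge (T : finType) (r : nat) (E : {set {set T}}) (U : {set T}) :
  (disc r E U <= disc_plus r E)%R.
Proof.
by rewrite /disc_plus (bigD1 U) //= le_max lexx.
Qed.

Lemma sD_disj (T : finType) (X S : {set T}) : [disjoint S & X] -> #|S :\: X| = #|S|.
Proof. by rewrite -setI_eq0 cardsD => /eqP ->; rewrite cards0 subn0. Qed.

Lemma sD_meet (T : finType) (X S : {set T}) : ~~ [disjoint S & X] -> #|S :\: X| < #|S|.
Proof.
rewrite -setI_eq0 cardsD => ne; rewrite ltn_subrL card_gt0 ne /=.
by apply: (leq_trans _ (subset_leq_card (subsetIl S X))); rewrite card_gt0.
Qed.


Local Open Scope ring_scope.

Lemma div_mono (N : rat) (a b : nat) : 0 <= N -> (a <= b)%N ->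
  N / (2^b)%:R <= N / (2^a)%:R.
Proof.
move=> N0 ab; apply: ler_wpM2l => //.
rewrite lef_pV2. - by rewrite ler_nat leq_pexp2l. - by rewrite posrE ltr0n expn_gt0. - by rewrite posrE ltr0n expn_gt0. Qed.

Local Open Scope ring_scope.

Unset Implicit Arguments. Set Strict Implicit.

Theorem lemma5p2 (r : nat) (hr : (2 <= r)%N) :
  exists c1 C : rat, 0 < c1 /\ 0 < C /\
    forall (T : finType) (E : {set {set T}}) (X : {set T}),
      uniform r E ->
      (forall x, x \in X -> C * avg_deg r E <= (deg E x)%:R) ->
      c1 * (#|boundary E X|)%:R <= disc_plus r E.
Proof.
case: r hr => [//|s] hr.
exists ((2 ^ s.+2)%:R^-1), ((s.+1 * 2 ^ s.+2)%:R).
split; first by rewrite invr_gt0 ltr0n expn_gt0.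
split; first by rewrite ltr0n muln_gt0 expn_gt0.
move=> T E X U Hdeg.
have [E0|[e0 e0E]] := set_0Vmem E.
  have -> : boundary E X = set0 by rewrite /boundary E0; apply/setP => e; rewrite !inE.
  rewrite cards0 mulr0; apply: le_trans (disc_plus_ge s.+1 E set0).
  by rewrite /disc /e_in /density E0 card_sum big_set0 !cards0 bin0n /= mulr0 subr0.
set n := #|T|.
have nr : (s.+1 <= n)%N by rewrite -(U e0 e0E) max_card.
set K := 'C(n, s.+1).
have K0 : (0 < K)%N by rewrite bin_gt0.
set m := #|~: X|.
set N : rat := (2^m)%:R.
set b := #|boundary E X|.
have F1 : \sum_(W in powerset (~: X)) disc s.+1 E (X :|: W) <= N * disc_plus s.+1 E.
  have -> : N = #|powerset (~: X)|%:R by rewrite card_powerset.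
  rewrite mulrC mulr_natr -sumr_const; apply: ler_sum => W _; exact: disc_plus_ge.
set w := fun S : {set T} => N / (2 ^ #|S :\: X|)%:R.
have Wexact : forall S : {set T}, (2 ^ (m - #|S :\: X|))%:R = w S.
  move=> S; rewrite /w /N.
  have le : (#|S :\: X| <= m)%N.
    by apply: subset_leq_card; apply/subsetP => y; rewrite !inE => /andP[].
  by rewrite -{2}(subnK le) expnD natrM mulfK // pnatr_eq0 expn_eq0.
set R := [set S : {set T} | #|S| == s.+1].
have F2 : \sum_(W in powerset (~: X)) disc s.+1 E (X :|: W)
    = \sum_(e in E) w e - density s.+1 E * \sum_(S in R) w S.
  rewrite /disc sumrB -mulr_sumr.
  congr (_ - _ * _).
    rewrite -natr_sum /e_in sum_shift natr_sum; apply: eq_bigr => e _; exact: Wexact.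
  have CE : forall V : {set T}, 'C(#|V|, s.+1) = #|[set S in R | S \subset V]|.
    by move=> V; rewrite -cards_draws; apply: eq_card => S; rewrite !inE andbC.
  under eq_bigr => W _ do rewrite CE.
  rewrite -natr_sum sum_shift natr_sum; apply: eq_bigr => S _; exact: Wexact.
have N0 : 0 <= N by rewrite ler0n.
have t0 : 0 < (2 ^ s.+1)%:R :> rat by rewrite ltr0n expn_gt0.
have ts : (2 ^ s.+1)%:R = 2 * (2 ^ s)%:R :> rat by rewrite expnS natrM.
have ts0 : 0 < (2 ^ s)%:R :> rat by rewrite ltr0n expn_gt0.
set Q := N / (2 ^ s.+1)%:R.
have Q0 : 0 <= Q by rewrite divr_ge0 // ltW.
have F3 : Q * #|E|%:R + Q * b%:R <= \sum_(e in E) w e.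
  have -> : #|E|%:R = \sum_(e in E) (1 : rat) by rewrite sumr_const.
  have -> : b%:R = \sum_(e in E) ((~~ [disjoint e & X]) : nat)%:R :> rat.
    by rewrite /b /boundary card_sum natr_sum.
  rewrite !mulr_sumr -big_split /=; apply: ler_sum => e eE.
  case: (boolP [disjoint e & X]) => D /=.
    by rewrite /w sD_disj // (U e eE) mulr1 mulr0 addr0.
  rewrite mulr1.
  have -> : Q + Q = N / (2^s)%:R.
    rewrite /Q ts; field; apply/lt0r_neq0 => //.
  apply: div_mono => //; have := sD_meet D; rewrite (U e eE) ltnS; exact.
set M := #|[set S in R | ~~ [disjoint S & X]]|.
have F4 : \sum_(S in R) w S <= Q * K%:R + N * M%:R.
  have -> : K%:R = \sum_(S in R) (1:rat) by rewrite sumr_const /R card_draws.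
  have -> : M%:R = \sum_(S in R) ((~~ [disjoint S & X]) : nat)%:R :> rat.
    by rewrite /M card_sum natr_sum.
  rewrite !mulr_sumr -big_split /=; apply: ler_sum => S; rewrite inE => /eqP cS.
  case: (boolP [disjoint S & X]) => D /=.
    by rewrite /w sD_disj // cS mulr1 mulr0 addr0.
  rewrite mulr1; apply: ler_wpDl => //.
  by have := div_mono N0 (leq0n #|S :\: X|); rewrite expn0 divr1.
have F6 : (M <= #|X| * 'C(n.-1, s))%N.
  rewrite /M card_sum.
  apply: (@leq_trans (\sum_(S in R) \sum_(x in X) ((x \in S) : nat))).
    apply: leq_sum => S _; case: (boolP [disjoint S & X]) => //= D.
    rewrite -setI_eq0 in D.
    rewrite -card_sum (_ : [set x in X | x \in S] = S :&: X) ?card_gt0 //.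
    by apply/setP => y; rewrite !inE andbC.
  rewrite exchange_big /= (eq_bigr (fun _ => 'C(n.-1, s))) ?sum_nat_const // => x _.
  rewrite -card_sum -(count_contain x s); apply: eq_card => S; rewrite !inE.
  by [].
have BI : (n * 'C(n.-1, s) = s.+1 * K)%N by rewrite mul_bin_diag.
have F7 : (s.+1 * 2 ^ s.+2)%:R * avg_deg s.+1 E * #|X|%:R <= (s.+1 * b)%:R :> rat.
  apply: (@le_trans _ _ (\sum_(x in X) (deg E x)%:R)).
    rewrite mulr_natr -sumr_const; apply: ler_sum => x xX; exact: Hdeg.
  rewrite -natr_sum ler_nat; exact: deg_sum.
set p := density s.+1 E.
set d := avg_deg s.+1 E.
set D := disc_plus s.+1 E.
set SE := \sum_(e in E) w e.
set SR := \sum_(S in R) w S.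
set t : rat := (2 ^ s.+1)%:R.
have nr0 : 0 < n%:R :> rat by rewrite ltr0n (leq_trans _ nr).
have Kr0 : 0 < K%:R :> rat by rewrite ltr0n.
have p0 : 0 <= p by rewrite /p /density divr_ge0 // ler0n.
have pK : p * K%:R = #|E|%:R by rewrite /p /density mulfVK // lt0r_neq0.
have G1 : p * M%:R <= d * #|X|%:R.
  apply: (@le_trans _ _ (p * (#|X| * 'C(n.-1, s))%:R)).
    by apply: ler_wpM2l => //; rewrite ler_nat.
  have Cb : ('C(n.-1, s))%:R = (s.+1)%:R * K%:R / n%:R :> rat.
    by rewrite -natrM -BI natrM; field; rewrite lt0r_neq0.
  rewrite natrM Cb /p /d /density /avg_deg natrM; rewrite le_eqVlt; apply/orP; left; apply/eqP.
  field; rewrite !lt0r_neq0 //.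
have G2 : 2 * t * (d * #|X|%:R) <= b%:R.
  have sp : 0 < (s.+1)%:R :> rat by rewrite ltr0n.
  move: F7; rewrite (expnS 2 s.+1) !natrM -/t -/d => F7.
  have : (s.+1)%:R * (2 * t * (d * #|X|%:R) - b%:R) <= 0 by lra.
  by rewrite pmulr_rle0 // subr_le0.
have A3 : p * SR <= Q * #|E|%:R + N * (p * M%:R).
  apply: (le_trans (ler_wpM2l p0 F4)); rewrite -pK le_eqVlt; apply/orP; left; apply/eqP.
  ring.
have A4 : N * (p * M%:R) <= N * (d * #|X|%:R) by apply: ler_wpM2l.
have A5 : N * (2 * t * (d * #|X|%:R)) <= N * b%:R by apply: ler_wpM2l.
have Qt : Q * t = N by rewrite /Q /t mulfVK // lt0r_neq0.
have A1 : SE - p * SR <= N * D by rewrite -F2.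
have B : N * (D * (2 * t) - b%:R) >= 0.
  have H1 : (N * D) * (2 * t) >= (Q * b%:R - N * (d * #|X|%:R)) * (2 * t).
    apply: ler_wpM2r; first by rewrite mulr_ge0 // ltW.
    have := (F3 : _ <= SE); have := A1; have := A3; have := A4.
    move: (p * SR) (N * D) (Q * #|E|%:R) (Q * b%:R) (N * (p * M%:R)) (N * (d * #|X|%:R)).
    move=> a1 a2 a3 a4 a5 a6; lra.
  have E1 : (Q * b%:R - N * (d * #|X|%:R)) * (2 * t)
      = 2 * (N * b%:R) - N * (2 * t * (d * #|X|%:R)) by rewrite -Qt; ring.
  have E2 : N * (D * (2 * t) - b%:R) = (N * D) * (2 * t) - N * b%:R by ring.
  rewrite E2; rewrite E1 in H1; move: H1 A5.
  move: (N * D * (2 * t)) (N * b%:R) (N * (2 * t * (d * #|X|%:R))) => a1 a2 a3; lra.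
have N0' : 0 < N by rewrite ltr0n expn_gt0.
rewrite pmulr_rge0 // subr_ge0 in B.
have T2 : (2 ^ s.+2)%:R = 2 * t :> rat by rewrite expnS natrM.
by rewrite T2 mulrC ler_pdivrMr ?mulr_gt0.
Qed.
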